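(* For a metrizable topological group $G$ which is Weil complete (i.e. complete with respect to its left uniformity), the following are equivalent: (i) $G$ is NSS; (ii) $G$ is STAP; (iii) $G$ is HTAP; (iv) $G$ is TAP.
   Context: $e$ is the neutral element; $\prod_{k=1}^n a_k=a_1\cdots a_n$. $G$ is NSS if some neighborhood of $e$ contains no nontrivial subgroup of $G$. A sequence $(g_n)$ in $G$ is hyper-multipliable if for every integer sequence $(m_n)$ the sequence $\left(\prod_{k=1}^n g_k^{m_k}\right)_n$ converges in $G$; hyper-converging if $g_n^{m_n}\to e$ for every integer sequence $(m_n)$. A subset $A\subset G$ is absolutely productive if every sequence of pairwise distinct elements of $A$ is hyper-multipliable. $G$ is TAP if every absolutely productive subset is finite; HTAP if no sequence of pairwise distinct elements is hyper-multipliable; STAP if no sequence of pairwise distinct elements is hyper-converging. *)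

(* Defs.v *)
From Stdlib Require Import Reals ZArith List.
Open Scope R_scope.

Record TopGroup := {
  carrier :> Type;
  mul : carrier -> carrier -> carrier;
  inv : carrier -> carrier;
  one : carrier;
  mul_assoc : forall x y z, mul x (mul y z) = mul (mul x y) z;
  mul_1l : forall x, mul one x = x;
  mul_1r : forall x, mul x one = x;
  mul_Vl : forall x, mul (inv x) x = one;
  mul_Vr : forall x, mul x (inv x) = one;
  is_open : (carrier -> Prop) -> Prop;
  open_full : is_open (fun _ => True);
  open_inter : forall U V, is_open U -> is_open V ->
                 is_open (fun x => U x /\ V x);
  open_union : forall (I : Type) (F : I -> carrier -> Prop),
                 (forall i, is_open (F i)) -> is_open (fun x => exists i, F i x);
  mul_cont : forall x y (W : carrier -> Prop), is_open W -> W (mul x y) ->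
               exists U V : carrier -> Prop, is_open U /\ is_open V /\ U x /\ V y /\
                 (forall a b, U a -> V b -> W (mul a b));
  inv_cont : forall W, is_open W -> is_open (fun x => W (inv x))
}.

Arguments mul {G} : rename.
Arguments inv {G} : rename.
Arguments one {G} : rename.
Arguments is_open {G} : rename.

Section Defs.
Variable G : TopGroup.

Definition nbhd (U : G -> Prop) (x : G) : Prop :=
  exists V, is_open V /\ V x /\ forall y, V y -> U y.

Fixpoint npow (x : G) (n : nat) : G :=
  match n with O => one | S k => mul (npow x k) x end.

Definition zpow (x : G) (m : Z) : G :=
  match m with
  | Z0 => one
  | Zpos p => npow x (Pos.to_nat p)
  | Zneg p => inv (npow x (Pos.to_nat p))
  end.

Fixpoint prodn (f : nat -> G) (n : nat) : G :=
  match n with O => f O | S k => mul (prodn f k) (f (S k)) end.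

Definition seq_converges (s : nat -> G) (x : G) : Prop :=
  forall U, is_open U -> U x -> exists N, forall n, (N <= n)%nat -> U (s n).

Definition seq_convergent (s : nat -> G) : Prop := exists x, seq_converges s x.

Definition injective_seq (g : nat -> G) : Prop :=
  forall i j, g i = g j -> i = j.

Definition hyper_multipliable (g : nat -> G) : Prop :=
  forall m : nat -> Z, seq_convergent (prodn (fun k => zpow (g k) (m k))).

Definition hyper_converging (g : nat -> G) : Prop :=
  forall m : nat -> Z, seq_converges (fun n => zpow (g n) (m n)) one.

Definition absolutely_productive (A : G -> Prop) : Prop :=
  forall g : nat -> G, injective_seq g -> (forall n, A (g n)) -> hyper_multipliable g.

Definition finite_set (A : G -> Prop) : Prop :=
  exists l : list G, forall x, A x -> In x l.

Definition is_subgroup (H : G -> Prop) : Prop :=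
  H one /\ (forall x y, H x -> H y -> H (mul x y)) /\ (forall x, H x -> H (inv x)).

Definition NSS : Prop :=
  exists U, nbhd U one /\
    forall H, is_subgroup H -> (forall x, H x -> U x) -> forall x, H x -> x = one.

Definition TAP : Prop :=
  forall A, absolutely_productive A -> finite_set A.

Definition HTAP : Prop :=
  forall g : nat -> G, injective_seq g -> ~ hyper_multipliable g.

Definition STAP : Prop :=
  forall g : nat -> G, injective_seq g -> ~ hyper_converging g.

Definition metrizable : Prop :=
  exists d : G -> G -> R,
    (forall x y, 0 <= d x y) /\
    (forall x y, d x y = 0 <-> x = y) /\
    (forall x y, d x y = d y x) /\
    (forall x y z, d x z <= d x y + d y z) /\
    (forall U : G -> Prop, is_open U <->
       forall x, U x -> exists eps, 0 < eps /\ forall y, d x y < eps -> U y).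

(* filters, and completeness w.r.t. the left uniformity
   (entourages {(x,y) | x^-1 y in U}, U neighborhood of e) *)
Definition proper_filter (F : (G -> Prop) -> Prop) : Prop :=
  F (fun _ => True) /\
  (forall A B, F A -> F B -> F (fun x => A x /\ B x)) /\
  (forall A B : G -> Prop, F A -> (forall x, A x -> B x) -> F B) /\
  ~ F (fun _ => False).

Definition left_cauchy (F : (G -> Prop) -> Prop) : Prop :=
  forall U, nbhd U one ->
    exists A, F A /\ forall x y, A x -> A y -> U (mul (inv x) y).

Definition filter_converges (F : (G -> Prop) -> Prop) (x : G) : Prop :=
  forall U, nbhd U x -> F U.

Definition weil_complete : Prop :=
  forall F, proper_filter F -> left_cauchy F -> exists x, filter_converges F x.

End Defs.

(* Main.v *)
Require Import Defs.
From Stdlib Require Import Reals ZArith List Lia Lra Classical ClassicalEpsilon.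

Section Alg.
Variable G : TopGroup.
Local Notation npow := (npow G).
Local Notation zpow := (zpow G).

Lemma inv_one : inv (@one G) = one.
Proof. rewrite <- (mul_1r G (inv one)). apply mul_Vl. Qed.

Lemma inv_inv (x : G) : inv (inv x) = x.
Proof.
  rewrite <- (mul_1r G (inv (inv x))). rewrite <- (mul_Vl G x).
  rewrite mul_assoc, mul_Vl, mul_1l. reflexivity.
Qed.

Lemma mul_cancel_l (a b : G) : mul (inv a) (mul a b) = b.
Proof. rewrite mul_assoc, mul_Vl, mul_1l; reflexivity. Qed.

Lemma inv_uniq (y z : G) : mul y z = one -> inv y = z.
Proof. intros H. rewrite <- (mul_cancel_l y z), H, mul_1r. reflexivity. Qed.

Lemma inv_mul (a b : G) : inv (mul a b) = mul (inv b) (inv a).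
Proof.
  apply inv_uniq. rewrite <- mul_assoc, (mul_assoc G b), mul_Vr, mul_1l, mul_Vr. reflexivity.
Qed.

Lemma npow_comm (x : G) n : mul (npow x n) x = mul x (npow x n).
Proof.
  induction n; simpl. rewrite mul_1l, mul_1r; auto.
  rewrite IHn at 1. rewrite mul_assoc. reflexivity.
Qed.

Lemma zpow_succ (x : G) a : zpow x (Z.succ a) = mul (zpow x a) x.
Proof.
  destruct a as [|p|p].
  - change (npow x 1 = mul one x). reflexivity.
  - simpl. replace (Z.succ (Z.pos p)) with (Z.pos (Pos.succ p)) by lia. simpl.
    rewrite Pos2Nat.inj_add; simpl; rewrite Nat.add_1_r; reflexivity.
  - destruct (Pos.eq_dec p 1) as [->|Hp].
    + subst. simpl. rewrite mul_1l, mul_Vl. reflexivity.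
    + replace (Z.succ (Z.neg p)) with (Z.neg (Pos.pred p)) by lia. simpl.
      assert (Pos.to_nat p = S (Pos.to_nat (Pos.pred p))) as E by lia.
      rewrite E. simpl. rewrite npow_comm, inv_mul, <- mul_assoc, mul_Vl, mul_1r. reflexivity.
Qed.

Lemma zpow_pred (x : G) a : zpow x (Z.pred a) = mul (zpow x a) (inv x).
Proof.
  rewrite <- (Z.succ_pred a) at 2. rewrite zpow_succ, <- mul_assoc, mul_Vr, mul_1r. reflexivity.
Qed.

Lemma zpow_add (x : G) a b : zpow x (a + b) = mul (zpow x a) (zpow x b).
Proof.
  induction b using Z.peano_ind.
  - rewrite Z.add_0_r. simpl. rewrite mul_1r. reflexivity.
  - rewrite Z.add_succ_r, !zpow_succ, IHb, mul_assoc. reflexivity.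
  - rewrite Z.add_pred_r, !zpow_pred, IHb, mul_assoc. reflexivity.
Qed.

Lemma zpow_opp (x : G) a : zpow x (- a) = inv (zpow x a).
Proof.
  destruct a; simpl. rewrite inv_one; auto. auto. rewrite inv_inv; auto.
Qed.

Lemma zpow_1 (x : G) : zpow x 1 = x.
Proof. simpl. apply mul_1l. Qed.

Lemma zpow_sub (H : G -> Prop) x m : is_subgroup G H -> H x -> H (zpow x m).
Proof.
  intros [H1 [Hm Hi]] Hx.
  assert (forall n, H (npow x n)) by (induction n; simpl; auto).
  destruct m; simpl; auto.
Qed.

Lemma cyclic_sub (x : G) : is_subgroup G (fun y => exists m, y = zpow x m).
Proof.
  split; [|split].
  - exists 0%Z. reflexivity.
  - intros a b [m1 ->] [m2 ->]. exists (m1 + m2)%Z. now rewrite zpow_add.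
  - intros a [m ->]. exists (- m)%Z. now rewrite zpow_opp.
Qed.
End Alg.

Section Easy.
Variable G : TopGroup.

Lemma nss_stap : NSS G -> STAP G.
Proof.
  intros [U [[V [HVo [HV1 HVU]]] HN]] g Hinj Hhc.
  assert (Hm : forall n, exists m, g n <> one -> ~ V (zpow G (g n) m)).
  { intro n. destruct (classic (exists m, ~ V (zpow G (g n) m))) as [[m Hm]|Hno].
    - exists m; auto.
    - exists 0%Z. intros Hne _. apply Hne.
      apply (HN (fun y => exists m, y = zpow G (g n) m)).
      + apply cyclic_sub.
      + intros y [m ->]. apply HVU. apply NNPP. intro Hc. apply Hno. eauto.
      + exists 1%Z. now rewrite zpow_1. }
  destruct (choice _ Hm) as [m Hm'].
  destruct (Hhc m V HVo HV1) as [N HN'].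
  destruct (classic (g N = one)) as [E|E].
  - assert (g (S N) <> one) as E'. { intro E2. rewrite <- E2 in E. apply Hinj in E. lia. }
    apply (Hm' (S N) E'). apply HN'. lia.
  - apply (Hm' N E). apply HN'. lia.
Qed.

Lemma prodn_S (f : nat -> G) k :
  f (S k) = mul (inv (prodn G f k)) (prodn G f (S k)).
Proof. simpl. rewrite mul_cancel_l. reflexivity. Qed.

Lemma stap_htap : STAP G -> HTAP G.
Proof.
  intros Hs g Hinj Hhm. apply (Hs g Hinj). intros m W HWo HW1.
  destruct (Hhm m) as [x Hx].
  set (f := fun k => zpow G (g k) (m k)).
  rewrite <- (mul_Vl G x) in HW1.
  destruct (mul_cont G _ _ W HWo HW1) as [U [V [HUo [HVo [HU [HV HUV]]]]]].
  destruct (Hx (fun y => U (inv y) /\ V y)) as [N HN].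
  - apply open_inter; auto. apply inv_cont; auto.
  - auto.
  - exists (S N). intros n Hn. destruct n as [|k]; [lia|].
    change (W (f (S k))). rewrite prodn_S. apply HUV.
    + apply (HN k). lia.
    + apply (HN (S k)). lia.
Qed.

Lemma htap_tap : HTAP G -> TAP G.
Proof.
  intros Hh A HA. apply NNPP. intro Hinf.
  assert (Hnext : forall l : list G, exists x, A x /\ ~ In x l).
  { intro l. apply NNPP. intro Hc. apply Hinf. exists l. intros x Ax.
    apply NNPP. intro Hn. apply Hc. eauto. }
  destruct (choice _ Hnext) as [nx Hnx].
  set (L := fix L n := match n with O => nil | S k => nx (L k) :: L k end).
  set (g := fun n => nx (L n)).
  assert (Hin : forall i j, (i < j)%nat -> In (g i) (L j)).
  { intros i j. induction j; intros H; [lia|]. simpl.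
    destruct (Nat.eq_dec i j) as [->|Hne]. left; reflexivity. right. apply IHj. lia. }
  apply (Hh g).
  - intros i j E. destruct (lt_eq_lt_dec i j) as [[Hl|He]|Hl]; auto.
    + exfalso. apply (proj2 (Hnx (L j))). change (In (g j) (L j)). rewrite <- E. auto.
    + exfalso. apply (proj2 (Hnx (L i))). change (In (g i) (L i)). rewrite E. auto.
  - apply HA.
    + intros i j E. destruct (lt_eq_lt_dec i j) as [[Hl|He]|Hl]; auto.
      * exfalso. apply (proj2 (Hnx (L j))). change (In (g j) (L j)). rewrite <- E. auto.
      * exfalso. apply (proj2 (Hnx (L i))). change (In (g i) (L i)). rewrite E. auto.
    + intro n. apply (proj1 (Hnx (L n))).
Qed.
End Easy.
Open Scope R_scope.

Lemma small_inv eps : 0 < eps -> exists n : nat, / INR (S n) < eps.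
Proof.
  intros He. destruct (INR_unbounded (/ eps)) as [n Hn]. exists n.
  rewrite S_INR. assert (0 < / eps) by (apply Rinv_0_lt_compat; lra).
  rewrite <- (Rinv_inv eps). apply Rinv_lt_contravar.
  - apply Rmult_lt_0_compat; lra.
  - lra.
Qed.

Section Hard.
Variable G : TopGroup.

Definition lprod (l : list (nat * G)) : G := fold_right (fun p acc => mul (snd p) acc) one l.

Lemma lprod_app l1 l2 : lprod (l1 ++ l2) = mul (lprod l1) (lprod l2).
Proof.
  induction l1; simpl. rewrite mul_1l; auto. rewrite IHl1, mul_assoc; auto.
Qed.

Lemma list_bound (l : list (nat * G)) : exists K, forall p, In p l -> (fst p <= K)%nat.
Proof.
  induction l as [|a l [K HK]]. exists 0%nat; simpl; tauto.
  exists (Nat.max K (fst a)). intros p [->|Hp]. lia. specialize (HK p Hp). lia.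
Qed.

Lemma tail_inj (s : nat -> nat) : (forall i j, s i = s j -> i = j) ->
  forall N, exists K, forall k, (K <= k)%nat -> (N <= s k)%nat.
Proof.
  intros Hs N. induction N. exists 0%nat; intros; lia.
  destruct IHN as [K HK].
  destruct (classic (exists k0, s k0 = N)) as [[k0 Hk0]|Hno].
  - exists (Nat.max K (S k0)). intros k Hk. specialize (HK k ltac:(lia)).
    destruct (Nat.eq_dec (s k) N) as [E|E]; [|lia].
    rewrite <- Hk0 in E. apply Hs in E. lia.
  - exists K. intros k Hk. specialize (HK k Hk).
    destruct (Nat.eq_dec (s k) N) as [E|E]; [|lia]. exfalso; eauto.
Qed.

Variable W : nat -> G -> Prop.
Hypothesis Wone : forall n, W n one.
Hypothesis Wcube : forall n a b c, W (S n) a -> W (S n) b -> W (S n) c -> W n (mul a (mul b c)).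

Lemma Wdec n y : W (S n) y -> W n y.
Proof.
  intros H. pose proof (Wcube n y one one H (Wone _) (Wone _)). rewrite !mul_1l in H0.
  rewrite mul_1r in H0. exact H0.
Qed.

Lemma KL_aux K : forall t N l, (K <= N + t)%nat ->
  (forall p, In p l -> (N < fst p <= K)%nat /\ W (fst p) (snd p)) ->
  NoDup (map fst l) -> W N (lprod l).
Proof.
  induction t; intros N l HK Hl Hnd.
  - destruct l as [|p l]. apply Wone. exfalso. specialize (Hl p (or_introl eq_refl)). lia.
  - destruct (classic (exists p, In p l /\ fst p = S N)) as [[p [Hp Hf]]|Hno].
    + destruct (in_split _ _ Hp) as [l1 [l2 ->]].
      rewrite lprod_app. simpl.
      rewrite map_app in Hnd. simpl in Hnd.
      pose proof Hnd as Hni; apply NoDup_remove_2 in Hni.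
      pose proof Hnd as Hnd'; apply NoDup_remove_1 in Hnd'.
      rewrite <- map_app in Hni, Hnd'.
      assert (Hsub : forall q, In q (l1 ++ l2) -> (S N < fst q <= K)%nat /\ W (fst q) (snd q)).
      { intros q Hq. assert (In q (l1 ++ p :: l2)) as Hq'.
        { apply in_app_or in Hq. apply in_or_app. simpl. tauto. }
        destruct (Hl q Hq') as [H1 H2]. split; auto.
        assert (fst q <> S N). { intro E. apply Hni. rewrite Hf, <- E. apply in_map; auto. }
        lia. }
      apply Wcube.
      * apply IHt. lia. intros q Hq. apply Hsub, in_or_app; auto.
        rewrite map_app in Hnd'. eapply NoDup_app_remove_r; eauto.
      * rewrite <- Hf. apply (Hl p). apply in_or_app; simpl; auto.
      * apply IHt. lia. intros q Hq. apply Hsub, in_or_app; auto.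
        rewrite map_app in Hnd'. eapply NoDup_app_remove_l; eauto.
    + apply Wdec. apply IHt; auto. lia.
      intros q Hq. destruct (Hl q Hq) as [H1 H2]. split; auto.
      assert (fst q <> S N) by (intro E; apply Hno; eauto). lia.
Qed.

Lemma KL N l : (forall p, In p l -> (N < fst p)%nat /\ W (fst p) (snd p)) ->
  NoDup (map fst l) -> W N (lprod l).
Proof.
  intros Hl Hnd. destruct (list_bound l) as [K HK].
  apply (KL_aux K K); auto. lia. intros p Hp. destruct (Hl p Hp). specialize (HK p Hp). split; auto.
Qed.

Lemma prodn_split (s : nat -> nat) (f : nat -> G) a k :
  prodn G f (a + k) = mul (prodn G f a) (lprod (map (fun i => (s i, f i)) (seq (S a) k))).
Proof.
  induction k.
  - simpl. rewrite Nat.add_0_r, mul_1r. auto.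
  - rewrite seq_S, map_app, lprod_app. simpl.
    replace (a + S k)%nat with (S (a + k)) by lia. simpl. rewrite IHk.
    rewrite mul_1r, mul_assoc. replace (S (a + k)) with (S (a+k)) by lia. reflexivity.
Qed.
End Hard.
Open Scope R_scope.

Section Main.
Variable G : TopGroup.

Lemma tap_nss : metrizable G -> weil_complete G -> TAP G -> NSS G.
Proof.
  intros [d [d0 [dE [dS [dT dO]]]]] Hcomp HT. apply NNPP. intro Hn.
  set (ball := fun (n : nat) (y : G) => d one y < / INR (S n)).
  assert (Hball : forall n, is_open (ball n) /\ ball n one).
  { intro n. assert (0 < / INR (S n)) by (apply Rinv_0_lt_compat, lt_0_INR; lia).
    split.
    - apply dO. intros x Hx. unfold ball in Hx. exists (/ INR (S n) - d one x). split. lra.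
      intros y Hy. unfold ball. pose proof (dT one x y). lra.
    - unfold ball. rewrite (proj2 (dE one one) eq_refl). auto. }
  assert (Hstep : forall q : nat * (G -> Prop), exists W' : G -> Prop,
    (is_open (snd q) /\ snd q one) ->
    (is_open W' /\ W' one /\ (forall y, W' y -> ball (fst q) y) /\
     (forall y, W' y -> W' (inv y)) /\
     (forall a b c, W' a -> W' b -> W' c -> snd q (mul a (mul b c))))).
  { intros [n W]. simpl. destruct (classic (is_open W /\ W one)) as [[HWo HW1]|Hno]; [|exists W; tauto].
    assert (W (mul one one)) by (rewrite mul_1l; auto).
    destruct (mul_cont G _ _ W HWo H) as [U1 [V1 [HU1o [HV1o [HU1 [HV1 H1]]]]]].
    assert (V1 (mul one one)) by (rewrite mul_1l; auto).
    destruct (mul_cont G _ _ V1 HV1o H0) as [U2 [V2 [HU2o [HV2o [HU2 [HV2 H2]]]]]].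
    set (V0 := fun y => U1 y /\ (U2 y /\ (V2 y /\ ball n y))).
    assert (HV0o : is_open V0).
    { repeat apply open_inter; auto. apply Hball. }
    assert (HV01 : V0 one). { unfold V0. repeat split; auto. apply Hball. }
    exists (fun y => V0 y /\ V0 (inv y)). intros _. split; [|split; [|split; [|split]]].
    - apply open_inter; auto. apply inv_cont; auto.
    - rewrite inv_one. auto.
    - intros y [[_ [_ [_ Hy]]] _]. auto.
    - intros y [Hy1 Hy2]. rewrite inv_inv. auto.
    - intros a b c [[Ha _] _] [[_ [Hb _]] _] [[_ [_ [Hc _]]] _]. auto. }
  destruct (choice _ Hstep) as [st Hst].
  set (W := fix W n := match n with O => fun _ : G => True | S k => st (k, W k) end).
  assert (HW : forall n, is_open (W n) /\ W n one).
  { induction n. simpl. split; auto. apply open_full.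
    destruct (Hst (n, W n) IHn) as [A1 [A2 _]]. simpl. auto. }
  assert (HWS : forall n, (forall y, W (S n) y -> ball n y) /\
     (forall y, W (S n) y -> W (S n) (inv y)) /\
     (forall a b c, W (S n) a -> W (S n) b -> W (S n) c -> W n (mul a (mul b c)))).
  { intro n. destruct (Hst (n, W n) (HW n)) as [_ [_ X]]. exact X. }
  assert (Hg : forall n, exists x, x <> one /\ forall m, W n (zpow G x m)).
  { intro n. apply NNPP. intro Hc. apply Hn. exists (W n). split.
    - exists (W n). split; [apply HW|split; [apply HW|auto]].
    - intros H Hsub HHW x Hx. apply NNPP. intro Hx1. apply Hc. exists x. split; auto.
      intro m. apply HHW. apply zpow_sub; auto. }
  destruct (choice _ Hg) as [g Hg'].
  set (A := fun y => exists n, y = g n).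
  assert (HAP : absolutely_productive G A).
  { intros h Hinj HA m.
    destruct (choice _ HA) as [s Hs].
    assert (Hsinj : forall i j, s i = s j -> i = j).
    { intros i j E. apply Hinj. rewrite (Hs i), (Hs j), E. auto. }
    set (f := fun k => zpow G (h k) (m k)).
    assert (Hf : forall k, W (s k) (f k)). { intro k. unfold f. rewrite (Hs k). apply Hg'. }
    set (x := prodn G f).
    assert (HP : forall N a k, (forall i, (a < i)%nat -> (N < s i)%nat) ->
       W N (lprod G (map (fun i => (s i, f i)) (seq (S a) k)))).
    { intros N a k Ha. apply KL.
      - intro n. apply HW.
      - intros n a0 b c. apply HWS.
      - intros p Hp. apply in_map_iff in Hp. destruct Hp as [i [<- Hi]]. apply in_seq in Hi.
        simpl. split; auto. apply Ha. lia.
      - rewrite map_map. simpl. apply NoDup_map_NoDup_ForallPairs; [|apply seq_NoDup].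
        intros i j _ _. apply Hsinj. }
    set (F := fun B : G -> Prop => exists N, forall n, (N <= n)%nat -> B (x n)).
    assert (HF : proper_filter G F).
    { split; [|split; [|split]].
      - exists 0%nat; auto.
      - intros B C [N1 H1] [N2 H2]. exists (Nat.max N1 N2). intros n Hn'. split; [apply H1|apply H2]; lia.
      - intros B C [N1 H1] HBC. exists N1. auto.
      - intros [N1 H1]. apply (H1 N1). lia. }
    assert (HC : left_cauchy G F).
    { intros U [V [HVo [HV1 HVU]]].
      destruct (proj1 (dO V) HVo one HV1) as [eps [Heps Hball']].
      destruct (small_inv eps Heps) as [n Hn'].
      destruct (tail_inj s Hsinj (S (S n))) as [K HK].
      exists (fun z => exists k, (K <= k)%nat /\ z = x k). split.
      - exists K. intros k Hk. eauto.
      - assert (Hin : forall y, W (S n) y -> U y).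
        { intros y Hy. apply HVU, Hball'. apply (proj1 (HWS n)) in Hy. unfold ball in Hy. lra. }
        intros y z [a [Ha ->]] [b [Hb ->]].
        assert (Hr : forall a0 k, (K <= a0)%nat -> W (S n) (lprod G (map (fun i => (s i, f i)) (seq (S a0) k)))).
        { intros a0 k Ha0. apply HP. intros i Hi. specialize (HK i ltac:(lia)). lia. }
        destruct (le_lt_dec a b) as [Hab|Hab].
        + replace b with (a + (b - a))%nat by lia. unfold x. rewrite (prodn_split G s f a).
          rewrite mul_cancel_l. apply Hin, Hr. auto.
        + replace a with (b + (a - b))%nat by lia. unfold x. rewrite (prodn_split G s f b).
          rewrite inv_mul, <- mul_assoc, mul_Vl, mul_1r. apply Hin, (proj1 (proj2 (HWS n))), Hr. auto. }
    destruct (Hcomp F HF HC) as [z Hz]. exists z.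
    intros U HUo HUz. apply Hz. exists U. auto. }
  destruct (HT A HAP) as [l Hl].
  assert (Hdel : exists delta, 0 < delta /\ forall y, In y l -> y <> one -> delta <= d one y).
  { clear Hl. induction l as [|a l [de [Hde Hl]]].
    - exists 1. split. lra. simpl; tauto.
    - destruct (classic (a = one)) as [Ea|Ea].
      + exists de. split; auto. intros y [<-|Hy] Hy1; [tauto|auto].
      + assert (0 < d one a).
        { destruct (Rle_lt_or_eq_dec _ _ (d0 one a)) as [Hlt|Heq]; auto.
          exfalso. apply Ea. symmetry. apply dE. auto. }
        exists (Rmin de (d one a)). split. apply Rmin_glb_lt; auto.
        intros y [<-|Hy] Hy1. apply Rmin_r. eapply Rle_trans. apply Rmin_l. auto. }
  destruct Hdel as [de [Hde Hdl]].
  destruct (small_inv de Hde) as [n Hn'].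
  destruct (Hg' (S n)) as [Hne Hgw].
  specialize (Hgw 1%Z). rewrite zpow_1 in Hgw.
  apply (proj1 (HWS n)) in Hgw. unfold ball in Hgw.
  assert (In (g (S n)) l) by (apply Hl; exists (S n); auto).
  specialize (Hdl _ H Hne). lra.
Qed.
End Main.

Theorem theorem5p4 (G : TopGroup) (Hmet : metrizable G) (Hcomp : weil_complete G) :
  (NSS G <-> STAP G) /\ (STAP G <-> HTAP G) /\ (HTAP G <-> TAP G).
Proof.
  pose proof (nss_stap G). pose proof (stap_htap G). pose proof (htap_tap G).
  pose proof (tap_nss G Hmet Hcomp). tauto.
Qed.
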